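(* Let $(E\to M,\rho,\langle\cdot,\cdot\rangle,\circ)$ be a Courant algebroid and $(\mathbf I,\mathbf J,\mathbf K)$ an almost hypercomplex structure on $E$. The following are equivalent: (i) $N_{\mathbf I,\mathbf I}=N_{\mathbf J,\mathbf J}=0$; (ii) $N_{\mathbf I,\mathbf J}=0$; (iii) $N_{\mathbf I,\mathbf I}=N_{\mathbf J,\mathbf J}=N_{\mathbf K,\mathbf K}=N_{\mathbf I,\mathbf J}=N_{\mathbf J,\mathbf K}=N_{\mathbf K,\mathbf I}=0$.
   Context: A Courant algebroid $(E\to M,\rho,\langle\cdot,\cdot\rangle,\circ)$ consists of a real vector bundle $E\to M$ over a smooth manifold, a nondegenerate symmetric fiberwise bilinear pairing $\langle\cdot,\cdot\rangle$ on $E$, a vector bundle map $\rho:E\to TM$ (the anchor), and an $\mathbb R$-bilinear operation $\circ$ on $\Gamma(E)$ (the Dorfman bracket) such that for all $f\in C^\infty(M)$, $x,y,z\in\Gamma(E)$: $x\circ(y\circ z)=(x\circ y)\circ z+y\circ(x\circ z)$; $\rho(x\circ y)=[\rho(x),\rho(y)]$; $x\circ(fy)=(\rho(x)f)y+f(x\circ y)$; $x\circ y+y\circ x=2D\langle x,y\rangle$; $(Df)\circ x=0$; $\rho(x)\langle y,z\rangle=\langle x\circ y,z\rangle+\langle y,x\circ z\rangle$. Here $D:C^\infty(M)\to\Gamma(E)$ is the $\mathbb R$-linear map defined by $\langle Df,x\rangle=\tfrac12\rho(x)f$. For vector bundle endomorphisms $F,G$ of $E$ (over $\mathrm{id}_M$),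 the Nijenhuis concomitant is the tensor $N_{F,G}:E\otimes E\to E$ given by $N_{F,G}(X,Y)=FX\circ GY-F(X\circ GY)-G(FX\circ Y)+FG(X\circ Y)+GX\circ FY-G(X\circ FY)-F(GX\circ Y)+GF(X\circ Y)$. An almost hypercomplex structure on $E$ is a triple $(\mathbf I,\mathbf J,\mathbf K)$ of vector bundle endomorphisms of $E$ over $\mathrm{id}_M$, each orthogonal for $\langle\cdot,\cdot\rangle$, with $\mathbf I^2=\mathbf J^2=\mathbf K^2=\mathbf I\mathbf J\mathbf K=-1$. *)

(* Defs.v *)
(* Algebraic model of a Courant algebroid on sections:
   R  : the real scalars (generalized to any realFieldType),
   A  : the commutative R-algebra of smooth functions C^oo(M),
   V  : the A-module Gamma(E) of sections,
   endomorphisms of E over id_M  =  A-linear maps V -> V. *)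
From HB Require Import structures.
From mathcomp Require Import all_boot all_order all_algebra.
Set Implicit Arguments. Unset Strict Implicit. Unset Printing Implicit Defensive.
Import Order.TTheory GRing.Theory Num.Theory.
Local Open Scope ring_scope.

Section Courant.
Variables (R : realFieldType) (A : comAlgType R) (V : lmodType A).

(* an R-linear derivation of A, i.e. a vector field acting on functions *)
Definition derivation (d : A -> A) : Prop :=
  [/\ forall f g, d (f + g) = d f + d g,
      forall (r : R) f, d (r *: f) = r *: d f
    & forall f g, d (f * g) = f * d g + d f * g].

Definition anchor_ok (rho : V -> A -> A) : Prop :=
  (forall x, derivation (rho x)) /\
  (forall (a : A) x y f, rho (a *: x + y) f = a * rho x f + rho y f).

Definition pairing_ok (pair : V -> V -> A) : Prop :=
  [/\ forall x y, pair x y = pair y x,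
      forall (a : A) x y z, pair (a *: x + y) z = a * pair x z + pair y z,
      forall x, (forall y, pair x y = 0) -> x = 0
    & forall phi : V -> A,
        (forall (a : A) y z, phi (a *: y + z) = a * phi y + phi z) ->
        exists x, forall y, phi y = pair x y].

Definition bracket_Rbilinear (circ : V -> V -> V) : Prop :=
  [/\ forall x y z, circ (x + y) z = circ x z + circ y z,
      forall x y z, circ x (y + z) = circ x y + circ x z,
      forall (r : R) x y, circ ((r%:A : A) *: x) y = (r%:A : A) *: circ x y
    & forall (r : R) x y, circ x ((r%:A : A) *: y) = (r%:A : A) *: circ x y].

Definition courant_algebroid (rho : V -> A -> A) (pair : V -> V -> A)
  (circ : V -> V -> V) (D : A -> V) : Prop :=
  [/\ anchor_ok rho, pairing_ok pair, bracket_Rbilinear circ,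
      forall f x, pair (D f) x = (2%:R^-1 : R) *: rho x f &
      [/\ forall x y z, circ x (circ y z) = circ (circ x y) z + circ y (circ x z),
          forall x y f, rho (circ x y) f = rho x (rho y f) - rho y (rho x f),
          forall x (f : A) y, circ x (f *: y) = rho x f *: y + f *: circ x y,
          forall x y, circ x y + circ y x = (2%:R : A) *: D (pair x y) /\
          forall f x, circ (D f) x = 0
        & forall x y z, rho x (pair y z) = pair (circ x y) z + pair y (circ x z)]].

Definition nijenhuis (circ : V -> V -> V) (F G : V -> V) (X Y : V) : V :=
  circ (F X) (G Y) - F (circ X (G Y)) - G (circ (F X) Y) + F (G (circ X Y))
  + circ (G X) (F Y) - G (circ X (F Y)) - F (circ (G X) Y) + G (F (circ X Y)).

Definition nijenhuis_zero (circ : V -> V -> V) (F G : V -> V) : Prop :=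
  forall X Y, nijenhuis circ F G X Y = 0.

Definition orthogonal (pair : V -> V -> A) (F : V -> V) : Prop :=
  forall x y, pair (F x) (F y) = pair x y.

Definition almost_hypercomplex (pair : V -> V -> A) (I J K : {linear V -> V}) : Prop :=
  [/\ orthogonal pair I, orthogonal pair J, orthogonal pair K &
      [/\ forall x, I (I x) = - x, forall x, J (J x) = - x, forall x, K (K x) = - x
        & forall x, I (J (K x)) = - x]].

End Courant.

(* Main.v *)
Require Import Defs.
From HB Require Import structures.
From mathcomp Require Import all_boot all_order all_algebra.
Import GRing.Theory.
Local Open Scope ring_scope.


Definition ordk (n : nat) : 'I_4 :=
  match n with
  | 0 => @Ordinal 4 0 isT | 1 => @Ordinal 4 1 isT
  | 2 => @Ordinal 4 2 isT | _ => @Ordinal 4 3 isT end.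

(* quaternion table, 0=1,1=I,2=J,3=K ; qsg true = negative *)
Definition qmn (a b : nat) : nat :=
  match a, b with
  | 0, b => b | a, 0 => a
  | 1, 1 => 0 | 1, 2 => 3 | 1, _ => 2
  | 2, 1 => 3 | 2, 2 => 0 | 2, _ => 1
  | _, 1 => 2 | _, 2 => 1 | _, _ => 0 end.
Definition qsg (a b : nat) : bool :=
  match a, b with
  | 0, _ => false | _, 0 => false
  | 1, 1 => true | 1, 2 => false | 1, _ => true
  | 2, 1 => true | 2, 2 => true | 2, _ => false
  | _, 1 => false | _, 2 => true | _, _ => true end.
Definition qm (a b : 'I_4) : 'I_4 := ordk (qmn a b).
Definition sg (a b : 'I_4) : bool := qsg a b.
Definition sz (b : bool) : int := if b then -1 else 1.

Definition atom := ('I_4 * 'I_4 * 'I_4)%type.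
Definition inst := ('I_4 * 'I_4 * 'I_4 * 'I_4 * 'I_4)%type.

Definition Tlist (F G P Q S0 : 'I_4) : seq (int * atom) :=
  [:: (sz (sg F Q) * sz (sg G S0), (P, qm F Q, qm G S0));
      (- (sz (sg G S0) * sz (sg P F)), (qm P F, Q, qm G S0));
      (- (sz (sg F Q) * sz (sg P G)), (qm P G, qm F Q, S0));
      (sz (sg F G) * sz (sg P (qm F G)), (qm P (qm F G), Q, S0));
      (sz (sg G Q) * sz (sg F S0), (P, qm G Q, qm F S0));
      (- (sz (sg F S0) * sz (sg P G)), (qm P G, Q, qm F S0));
      (- (sz (sg G Q) * sz (sg P F)), (qm P F, qm G Q, S0));
      (sz (sg G F) * sz (sg P (qm G F)), (qm P (qm G F), Q, S0))].

Definition coef (l : seq (int * atom)) (u : atom) : int :=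
  foldr (fun p acc => (if p.2 == u then p.1 else 0) + acc) 0 l.

Definition scale (c : int) (l : seq (int * atom)) := [seq (c * p.1, p.2) | p <- l].
Definition combine (L : seq (int * inst)) : seq (int * atom) :=
  flatten [seq let: (c, (F, G, P, Q, S0)) := i in scale c (Tlist F G P Q S0) | i <- L].

Definition L1 : seq (int * inst) := [:: ((-1), ((ordk 1),(ordk 1),(ordk 0),(ordk 0),(ordk 3))); ((-1), ((ordk 1),(ordk 1),(ordk 0),(ordk 2),(ordk 1))); (1, ((ordk 1),(ordk 1),(ordk 2),(ordk 0),(ordk 1))); ((-1), ((ordk 1),(ordk 1),(ordk 2),(ordk 2),(ordk 3))); (1, ((ordk 2),(ordk 2),(ordk 0),(ordk 0),(ordk 3))); ((-1), ((ordk 2),(ordk 2),(ordk 0),(ordk 1),(ordk 2))); (1, ((ordk 2),(ordk 2),(ordk 1),(ordk 0),(ordk 2))); (1, ((ordk 2),(ordk 2),(ordk 1),(ordk 1),(ordk 3)))].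
Definition L2 : seq (int * inst) := [:: (1, ((ordk 1),(ordk 2),(ordk 0),(ordk 0),(ordk 3))); ((-1), ((ordk 1),(ordk 2),(ordk 0),(ordk 1),(ordk 2))); (1, ((ordk 1),(ordk 2),(ordk 1),(ordk 0),(ordk 2))); (1, ((ordk 1),(ordk 2),(ordk 1),(ordk 1),(ordk 3)))].
Definition L3 : seq (int * inst) := [:: ((-1), ((ordk 1),(ordk 2),(ordk 0),(ordk 0),(ordk 3))); ((-1), ((ordk 1),(ordk 2),(ordk 0),(ordk 2),(ordk 1))); (1, ((ordk 1),(ordk 2),(ordk 2),(ordk 0),(ordk 1))); ((-1), ((ordk 1),(ordk 2),(ordk 2),(ordk 2),(ordk 3)))].
Definition L4 : seq (int * inst) := [:: ((-1), ((ordk 1),(ordk 2),(ordk 0),(ordk 1),(ordk 2))); (1, ((ordk 1),(ordk 2),(ordk 0),(ordk 2),(ordk 1))); ((-1), ((ordk 1),(ordk 2),(ordk 1),(ordk 0),(ordk 2))); ((-1), ((ordk 1),(ordk 2),(ordk 1),(ordk 1),(ordk 3))); (2, ((ordk 1),(ordk 2),(ordk 1),(ordk 2),(ordk 0))); (1, ((ordk 1),(ordk 2),(ordk 2),(ordk 0),(ordk 1))); (1, ((ordk 1),(ordk 2),(ordk 2),(ordk 2),(ordk 3)))].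
Definition L5 : seq (int * inst) := [:: (1, ((ordk 1),(ordk 2),(ordk 2),(ordk 2),(ordk 2)))].
Definition L6 : seq (int * inst) := [:: ((-1), ((ordk 1),(ordk 2),(ordk 1),(ordk 1),(ordk 1)))].

Definition ords : seq 'I_4 := [:: ordk 0; ordk 1; ordk 2; ordk 3].
Definition all_atoms : seq atom := [seq (ab, c) | ab <- [seq (a, b) | a <- ords, b <- ords], c <- ords].
Definition chk (m : int) (F G : nat) (L : seq (int * inst)) : bool :=
  all (fun u : atom => m * coef (Tlist (ordk F) (ordk G) (ordk 0) (ordk 0) (ordk 0)) u == coef (combine L) u) all_atoms.

Lemma c1 : chk 4 1 2 L1. Proof. by vm_compute. Qed.
Lemma c2 : chk 1 1 1 L2. Proof. by vm_compute. Qed.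
Lemma c3 : chk 1 2 2 L3. Proof. by vm_compute. Qed.
Lemma c4 : chk 1 3 3 L4. Proof. by vm_compute. Qed.
Lemma c5 : chk 1 2 3 L5. Proof. by vm_compute. Qed.
Lemma c6 : chk 1 3 1 L6. Proof. by vm_compute. Qed.
Lemma all_atomsP (u : atom) : u \in all_atoms.
Proof.
have oP (a : 'I_4) : a \in ords.
  by rewrite -(mem_map val_inj); case: a => [[|[|[|[|a]]]] Ha].
case: u => [[a b] c]; rewrite /all_atoms.
apply: (allpairs_f (fun ab c => (ab, c))) => //.
exact: (allpairs_f (fun a b => (a, b))).
Qed.


Section S.
Variables (R : realFieldType) (A : comAlgType R) (V : lmodType A).
Variables (circ : V -> V -> V) (I J K : {linear V -> V}).
Hypotheses (cAl : forall x y z, circ (x + y) z = circ x z + circ y z)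
 (cAr : forall x y z, circ x (y + z) = circ x y + circ x z)
 (II : forall v, I (I v) = - v) (JJ : forall v, J (J v) = - v) (KK : forall v, K (K v) = - v)
 (IJ : forall v, I (J v) = K v) (JI : forall v, J (I v) = - K v)
 (JK : forall v, J (K v) = I v) (KJ : forall v, K (J v) = - I v)
 (KI : forall v, K (I v) = J v) (IK : forall v, I (K v) = - J v).

Definition op (a : 'I_4) (v : V) : V :=
  match val a with 0 => v | 1 => I v | 2 => J v | _ => K v end.

Definition sgn (b : bool) (v : V) := if b then - v else v.

Lemma opM a b v : op a (op b v) = sgn (sg a b) (op (qm a b) v).
Proof.
by case: a => [[|[|[|[|a]]]] Ha] //; case: b => [[|[|[|[|b]]]] Hb] //;
  rewrite /op /= ?II ?JJ ?KK ?IJ ?JI ?JK ?KJ ?KI ?IK ?opprK.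
Qed.

Lemma opD a u v : op a (u + v) = op a u + op a v.
Proof. by case: a => [[|[|[|[|a]]]] Ha] //; rewrite /op /= raddfD. Qed.
Lemma opN a v : op a (- v) = - op a v.
Proof. by case: a => [[|[|[|[|a]]]] Ha] //; rewrite /op /= raddfN. Qed.
Lemma op0 a : op a 0 = 0.
Proof. by case: a => [[|[|[|[|a]]]] Ha] //; rewrite /op /= raddf0. Qed.
Lemma opS a b v : op a (sgn b v) = sgn b (op a v).
Proof. by case: b => //=; rewrite opN. Qed.

Lemma circ0l v : circ 0 v = 0.
Proof. by apply: (addrI (circ 0 v)); rewrite -cAl !addr0. Qed.
Lemma circ0r v : circ v 0 = 0.
Proof. by apply: (addrI (circ v 0)); rewrite -cAr !addr0. Qed.
Lemma circNl u v : circ (- u) v = - circ u v.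
Proof. by apply: (addrI (circ u v)); rewrite -cAl !subrr circ0l. Qed.
Lemma circNr u v : circ u (- v) = - circ u v.
Proof. by apply: (addrI (circ u v)); rewrite -cAr !subrr circ0r. Qed.
Lemma circSl b u v : circ (sgn b u) v = sgn b (circ u v).
Proof. by case: b => //=; rewrite circNl. Qed.
Lemma circSr b u v : circ u (sgn b v) = sgn b (circ u v).
Proof. by case: b => //=; rewrite circNr. Qed.
Lemma sgnE b v : sgn b v = v *~ sz b.
Proof. by case: b; rewrite /= ?mulrN1z ?mulr1z. Qed.

Definition ev x y (t : atom) := op t.1.1 (circ (op t.1.2 x) (op t.2 y)).
Definition interp x y (l : seq (int * atom)) := \sum_(p <- l) ev x y p.2 *~ p.1.

Lemma Tlist_ok x y F G P Q S0 :
  op P (nijenhuis circ (op F) (op G) (op Q x) (op S0 y)) = interp x y (Tlist F G P Q S0).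
Proof.
rewrite /nijenhuis !(opD, opN).
rewrite (opM F G) (opM G F) (opM F Q) (opM G S0) (opM G Q) (opM F S0).
rewrite !(opS, circSl, circSr) !opM ?opS.
rewrite !sgnE !mulrzA_C.
rewrite /interp /Tlist !big_cons big_nil /ev /= !mulrNz addr0 !addrA.
done.
Qed.

Lemma interp_coef x y l : interp x y l = \sum_(u : atom) ev x y u *~ coef l u.
Proof.
elim: l => [|p l IH].
  by rewrite /interp big_nil; symmetry; apply: big1 => u _; rewrite /coef /= mulr0z.
rewrite /interp big_cons -/(interp x y l) IH.
symmetry; transitivity (\sum_(u : atom) (ev x y u *~ (if p.2 == u then p.1 else 0) + ev x y u *~ coef l u)).
  by apply: eq_bigr => u _; rewrite -mulrzDr.
rewrite big_split /= (bigD1 p.2) //= eqxx big1 ?addr0 // => u /negbTE.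
by rewrite eq_sym => ->; rewrite mulr0z.
Qed.

Lemma interp_scale x y c l : interp x y (scale c l) = interp x y l *~ c.
Proof.
rewrite /interp big_map mulrz_suml; apply: eq_bigr => p _ /=.
by rewrite mulrzA_C.
Qed.

Lemma interp_cat x y l1 l2 : interp x y (l1 ++ l2) = interp x y l1 + interp x y l2.
Proof. by rewrite /interp big_cat. Qed.

Definition okL (ok : 'I_4 -> 'I_4 -> bool) (i : int * inst) : bool :=
  let: (c, (F, G, P, Q, S0)) := i in ok F G.

Lemma comb0 x y (ok : 'I_4 -> 'I_4 -> bool) :
  (forall F G, ok F G -> nijenhuis_zero circ (op F) (op G)) ->
  forall L, all (okL ok) L -> interp x y (combine L) = 0.
Proof.
move=> Hok; elim=> [|[c [[[[F G] P] Q] S0]] L IH] /=.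
  by rewrite /interp big_nil.
move/andP=> [hFG hL].
have -> : combine ((c, (F, G, P, Q, S0)) :: L) = scale c (Tlist F G P Q S0) ++ combine L by [].
rewrite interp_cat IH // addr0 interp_scale.
by rewrite -Tlist_ok (Hok _ _ hFG) op0 mul0rz.
Qed.

Lemma cancelz (v : V) (m : int) : m != 0 -> v *~ m = 0 -> v = 0.
Proof.
move=> m0 h.
have r0 : (m%:~R : R) != 0 by rewrite intr_eq0.
have e : (m%:~R : A) = (m%:~R : R) *: 1 by rewrite scaler_int.
have : ((m%:~R : R)^-1 *: (1 : A)) *: (v *~ m) = v.
  rewrite -scaler_int scalerA e -scalerAl mul1r scalerA mulVf //.
  by rewrite !scale1r.
by rewrite h scaler0 => <-.
Qed.

Lemma derive (ok : 'I_4 -> 'I_4 -> bool) :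
  (forall F G, ok F G -> nijenhuis_zero circ (op F) (op G)) ->
  forall L (m : int) F G, m != 0 -> all (okL ok) L -> chk m F G L ->
  nijenhuis_zero circ (op (ordk F)) (op (ordk G)).
Proof.
move=> Hok L m F G m0 hL hc x y.
have T0 : nijenhuis circ (op (ordk F)) (op (ordk G)) x y =
   interp x y (Tlist (ordk F) (ordk G) (ordk 0) (ordk 0) (ordk 0)) :=
  Tlist_ok x y _ _ (ordk 0) (ordk 0) (ordk 0).


rewrite T0; have HH := @cancelz _ _ m0; apply: HH; rewrite -(comb0 x y ok Hok L hL) !interp_coef mulrz_suml.
apply: eq_bigr => u _; rewrite mulrzA_C.
by move/allP: hc => /(_ u (all_atomsP u)) /eqP ->.
Qed.
End S.

Definition ok1 (F G : 'I_4) : bool := ((F, G) == (ordk 1, ordk 1)) || ((F, G) == (ordk 2, ordk 2)).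
Definition ok2 (F G : 'I_4) : bool := (F, G) == (ordk 1, ordk 2).

Theorem mainTheorem9 (R : realFieldType) (A : comAlgType R) (V : lmodType A)
  (rho : V -> A -> A) (pair : V -> V -> A) (circ : V -> V -> V) (D : A -> V)
  (I J K : {linear V -> V}) :
  courant_algebroid rho pair circ D ->
  almost_hypercomplex pair I J K ->
  [<-> nijenhuis_zero circ I I /\ nijenhuis_zero circ J J;
       nijenhuis_zero circ I J;
       [/\ nijenhuis_zero circ I I, nijenhuis_zero circ J J,
           nijenhuis_zero circ K K /\ nijenhuis_zero circ I J,
           nijenhuis_zero circ J K & nijenhuis_zero circ K I]].
Proof.
move=> [_ _ [cAl cAr _ _] _ _] [_ _ _ [II JJ KK IJK]].
have IN u : I (- u) = - I u := raddfN I u.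
have JN u : J (- u) = - J u := raddfN J u.
have KN u : K (- u) = - K u := raddfN K u.
have IJ v : I (J v) = K v.
  by have := IJK (K v); rewrite KK !raddfN => /oppr_inj.
have JIJ v : J (I (J v)) = I v.
  have h : I (J (I (J v))) = - v by rewrite !IJ KK.
  by apply: oppr_inj; rewrite -[LHS]II h raddfN.
have JI v : J (I v) = - K v.
  by have := JIJ (J v); rewrite JJ IJ !raddfN => <-; rewrite opprK.
have JK v : J (K v) = I v by rewrite -IJ JIJ.
have KJ v : K (J v) = - I v by rewrite -IJ JJ IN.
have IK v : I (K v) = - J v by rewrite -IJ II.
have KI v : K (I v) = J v by rewrite -IJ JI IN IK opprK.
have Dv := @derive R A V circ I J K cAl cAr II JJ KK IJ JI JK KJ KI IK.
tfae=> [[h1 h2]|h12|[h11 h22 [hkk hij] hjk hki]].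
- have Hok : forall F G, ok1 F G -> nijenhuis_zero circ (@op R A V I J K F) (@op R A V I J K G).
    by move=> F G /orP[]/eqP[-> ->].
  exact: (Dv ok1 Hok L1 4 1 2 isT isT c1).
- have Hok : forall F G, ok2 F G -> nijenhuis_zero circ (@op R A V I J K F) (@op R A V I J K G).
    by move=> F G /eqP[-> ->].
  split.
  + exact: (Dv ok2 Hok L2 1 1 1 isT isT c2).
  + exact: (Dv ok2 Hok L3 1 2 2 isT isT c3).
  + split; last exact: h12.
    exact: (Dv ok2 Hok L4 1 3 3 isT isT c4).
  + exact: (Dv ok2 Hok L5 1 2 3 isT isT c5).
  + exact: (Dv ok2 Hok L6 1 3 1 isT isT c6).
- by split.
Qed.
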